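(* The orthomodular lattice MG1 does not admit a strong set of states. More precisely, every state $m$ on MG1 with $m(v)=1$ satisfies $m(u')=1$, although $v\not\le u'$.
   Context: MG1 is the orthomodular lattice given by the following Greechie diagram: that is, the unique (up to isomorphism) orthomodular lattice whose atoms are the listed atoms and whose blocks (maximal Boolean subalgebras) correspond to the listed blocks. In each block, the listed atoms are mutually orthogonal and their join is $1$. The diagram has no loops of order $3$ or $4$. The 19 atoms are $v,e_1,e_2,e_3,a_1,a_2,a_3,b_1,b_2,b_3,c_1,c_2,c_3,d_1,d_2,d_3,f_1,f_2,u$. The 11 blocks (each with three atoms) are: $\{v,e_1,a_1\}$, $\{v,e_2,a_2\}$, $\{v,e_3,a_3\}$, $\{a_1,b_1,c_1\}$, $\{a_2,b_2,c_2\}$, $\{a_3,b_3,c_3\}$, $\{b_1,b_2,b_3\}$, $\{c_1,f_1,d_1\}$, $\{c_2,f_2,d_2\}$, $\{c_3,u,d_3\}$, $\{d_1,d_2,d_3\}$. A state on an ortholattice $L$ is a map $m:L\to[0,1]$ with $m(1)=1$ and $a\le b'\Rightarrow m(a\cup b)=m(a)+m(b)$. $L$ admits a strong set of states if there is a nonempty set $S$ of states such that for all $a,b\in L$ with $a\not\le b$ some $m\in S$ has $m(a)=1$ and $m(b)\ne1$. *)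

(* Defs.v *)
From Stdlib Require Import Reals List.
Import ListNotations.
Open Scope R_scope.

Inductive atom : Type :=
  | v | e1 | e2 | e3 | a1 | a2 | a3 | b1 | b2 | b3
  | c1 | c2 | c3 | d1 | d2 | d3 | f1 | f2 | u.

(* The 11 blocks (three mutually orthogonal atoms, joining to 1). *)
Definition blocks : list (atom * atom * atom) :=
  [ (v, e1, a1); (v, e2, a2); (v, e3, a3);
    (a1, b1, c1); (a2, b2, c2); (a3, b3, c3);
    (b1, b2, b3);
    (c1, f1, d1); (c2, f2, d2); (c3, u, d3);
    (d1, d2, d3) ].

Definition in_block (x : atom) (blk : atom * atom * atom) : Prop :=
  match blk with (p, q, r) => x = p \/ x = q \/ x = r end.

Definition orth (x y : atom) : Prop :=
  x <> y /\ exists blk, In blk blocks /\ in_block x blk /\ in_block y blk.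

(* Elements of MG1: since every block has 3 atoms, the lattice consists of
   0, 1, the atoms x and their orthocomplements x' (the coatoms). *)
Inductive MG1 : Type :=
  | Zero : MG1
  | One : MG1
  | At : atom -> MG1
  | Co : atom -> MG1.

Definition compl (a : MG1) : MG1 :=
  match a with
  | Zero => One
  | One => Zero
  | At x => Co x
  | Co x => At x
  end.

Definition le (a b : MG1) : Prop :=
  match a, b with
  | Zero, _ => True
  | _, One => True
  | At x, At y => x = y
  | At x, Co y => orth x y
  | Co x, Co y => x = y
  | _, _ => False
  end.

Definition is_join (a b c : MG1) : Prop :=
  le a c /\ le b c /\ forall d, le a d -> le b d -> le c d.

Definition is_state (m : MG1 -> R) : Prop :=
  (forall a, 0 <= m a <= 1) /\
  m One = 1 /\
  (forall a b c, le a (compl b) -> is_join a b c -> m c = m a + m b).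

Definition admits_strong_set_of_states : Prop :=
  exists S : (MG1 -> R) -> Prop,
    (exists m, S m) /\
    (forall m, S m -> is_state m) /\
    (forall a b, ~ le a b -> exists m, S m /\ m a = 1 /\ m b <> 1).

(* Main.v *)
Require Import Defs.
From Stdlib Require Import Reals Lra List Bool.
Import ListNotations.
Open Scope R_scope.

Definition atom_dec (x y : atom) : {x = y} + {x <> y}.
Proof. decide equality. Defined.

Definition atom_eqb (x y : atom) : bool := if atom_dec x y then true else false.

Lemma atom_eqb_spec x y : atom_eqb x y = true <-> x = y.
Proof. unfold atom_eqb; destruct (atom_dec x y); split; congruence. Qed.

Definition inb (x : atom) (blk : atom*atom*atom) : bool :=
  match blk with (p,q,r) => atom_eqb x p || atom_eqb x q || atom_eqb x r end.

Lemma inb_spec x blk : inb x blk = true <-> in_block x blk.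
Proof.
  destruct blk as [[p q] r]; simpl. rewrite !orb_true_iff, !atom_eqb_spec. tauto.
Qed.

Definition orthb x y := negb (atom_eqb x y) && existsb (fun blk => inb x blk && inb y blk) blocks.

Lemma orthb_spec x y : orthb x y = true <-> orth x y.
Proof.
  unfold orthb, orth. rewrite andb_true_iff, negb_true_iff, existsb_exists.
  split.
  - intros [H1 [blk [Hi H2]]]. split.
    + intro E. apply atom_eqb_spec in E. congruence.
    + exists blk. apply andb_true_iff in H2. rewrite !inb_spec in H2. tauto.
  - intros [H1 [blk [Hi [H2 H3]]]]. split.
    + destruct (atom_eqb x y) eqn:E; [apply atom_eqb_spec in E; congruence|reflexivity].
    + exists blk. rewrite andb_true_iff, !inb_spec. tauto.
Qed.

Lemma block_sum : forall m, is_state m -> forall x y z, In (x,y,z) blocks ->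
  m (At x) + m (At y) + m (At z) = 1.
Proof.
  intros m [Hr [H1 Hadd]] x y z Hin.
  assert (J : is_join (At x) (At y) (Co z) /\ le (At x) (compl (At y))
           /\ le (At z) (compl (Co z)) /\ is_join (At z) (Co z) One).
  { simpl in Hin.
    repeat destruct Hin as [Hin|Hin]; try (inversion Hin; subst;
     repeat split; simpl; try (apply orthb_spec; reflexivity);
     try (intros d; destruct d; simpl; tauto);
     try (intros d HA HB; destruct d; simpl in *; try tauto; try congruence;
          match goal with a : atom |- _ =>
            apply orthb_spec in HA; apply orthb_spec in HB;
            destruct a; vm_compute in HA, HB; congruence end)).
    all: contradiction. }
  destruct J as [J1 [J2 [J3 J4]]].
  pose proof (Hadd _ _ _ J2 J1). pose proof (Hadd _ _ _ J3 J4). lra.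
Qed.

Lemma part2 : forall m : MG1 -> R, is_state m -> m (At v) = 1 -> m (Co u) = 1.
Proof.
  intros m Hs Hv.
  pose proof Hs as [Hr [H1 Hadd]].
  assert (Hb : forall x y z, In (x,y,z) blocks -> m (At x) + m (At y) + m (At z) = 1)
    by (apply block_sum; exact Hs).
  pose proof (Hb v Defs.e1 Defs.a1 ltac:(simpl; tauto)).
  pose proof (Hb v Defs.e2 Defs.a2 ltac:(simpl; tauto)).
  pose proof (Hb v Defs.e3 Defs.a3 ltac:(simpl; tauto)).
  pose proof (Hb Defs.a1 Defs.b1 Defs.c1 ltac:(simpl; tauto)).
  pose proof (Hb Defs.a2 Defs.b2 Defs.c2 ltac:(simpl; tauto)).
  pose proof (Hb Defs.a3 Defs.b3 Defs.c3 ltac:(simpl; tauto)).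
  pose proof (Hb Defs.b1 Defs.b2 Defs.b3 ltac:(simpl; tauto)).
  pose proof (Hb Defs.c1 Defs.f1 Defs.d1 ltac:(simpl; tauto)).
  pose proof (Hb Defs.c2 Defs.f2 Defs.d2 ltac:(simpl; tauto)).
  pose proof (Hb Defs.c3 u Defs.d3 ltac:(simpl; tauto)).
  pose proof (Hb Defs.d1 Defs.d2 Defs.d3 ltac:(simpl; tauto)).
  assert (Huc : le (At u) (compl (Co u))) by (simpl; reflexivity).
  assert (Hj : is_join (At u) (Co u) One).
  { repeat split; simpl; try apply orthb_spec; try reflexivity.
    intros d A B; destruct d; simpl in *; try tauto; subst; destruct A; congruence. }
  pose proof (Hadd _ _ _ Huc Hj).
  pose proof (Hr (At Defs.e1)). pose proof (Hr (At Defs.e2)). pose proof (Hr (At Defs.e3)).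
  pose proof (Hr (At Defs.a1)). pose proof (Hr (At Defs.a2)). pose proof (Hr (At Defs.a3)).
  pose proof (Hr (At Defs.f1)). pose proof (Hr (At Defs.f2)). pose proof (Hr (At u)).
  pose proof (Hr (At Defs.d1)). pose proof (Hr (At Defs.d2)). pose proof (Hr (At Defs.d3)).
  pose proof (Hr (At Defs.b1)). pose proof (Hr (At Defs.b2)). pose proof (Hr (At Defs.b3)).
  lra.
Qed.

Lemma part3 : ~ le (At v) (Co u).
Proof. simpl. intro H. apply orthb_spec in H. vm_compute in H. discriminate. Qed.

Theorem theorem6p6 :
  ~ admits_strong_set_of_states /\
  (forall m : MG1 -> R, is_state m -> m (At v) = 1 -> m (Co u) = 1) /\
  ~ le (At v) (Co u).
Proof.
  split; [|split; [exact part2| exact part3]].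
  intros [S [_ [HS Hst]]].
  destruct (Hst (At v) (Co u) part3) as [m [Sm [Hv Hu]]].
  apply Hu. apply part2; auto.
Qed.
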